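(* Let $m\ge1$ and let $1\le K\le N\le 2^m-1$ be integers. Define the bit-level decoding radius $$e^*=\min\Big\{\sum_{i=0}^m i\,a_i \;:\; a_0,\dots,a_m\in\mathbb{Z}_{\ge0},\ \sum_{i=0}^m a_i=N,\ \sum_{i=0}^m a_i2^{-i}\le K-1\Big\}.$$ Then $e^*=2(N-K+1)$ if $K\ge \frac12N+1$, and $e^*=3N-4(K-1)$ if $\frac14N+1\le K\le\frac12N+1$.
   Context: Setting: a Reed–Solomon code of length $N$ and dimension $K$ over $GF(2^m)$ whose symbols are sent as $m$ bits each over a binary erasure channel. $a_i$ is the number of received symbols with exactly $i$ erased bits (''type $i$''), so $\sum_i i a_i$ is the total number of erased bits. Under the proportional multiplicity assignment (each of the $2^i$ candidates of a type-$i$ symbol gets multiplicity $M2^{-i}$), the algebraic soft decoding sufficient condition $S\ge\sqrt{2(K-1)C}$, with score $S=\sum_i a_i M2^{-i}$ and cost $C=\frac12\sum_i a_i2^i(M2^{-i})^2$, is equivalent to $\eta=\sum_i a_i2^{-i}\ge K-1$; $e^*$ is the smallest number of erased bits for which the erasure pattern can bring $\eta$ down to at most $K-1$. *)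

(* Defs.v *)
From mathcomp Require Import all_boot all_order all_algebra.
Set Implicit Arguments. Unset Strict Implicit. Unset Printing Implicit Defensive.
Import Order.TTheory GRing.Theory Num.Theory.

Definition erased_bits (m : nat) (a : 'I_m.+1 -> nat) : nat :=
  (\sum_(i < m.+1) i * a i)%N.

Definition num_symbols (m : nat) (a : 'I_m.+1 -> nat) : nat :=
  (\sum_(i < m.+1) a i)%N.

Definition eta (m : nat) (a : 'I_m.+1 -> nat) : rat :=
  (\sum_(i < m.+1) (a i)%:R / (2%:R ^+ i))%R.

Definition feasible (m N K : nat) (a : 'I_m.+1 -> nat) : Prop :=
  num_symbols a = N /\ (eta a <= (K%:R - 1 : rat))%R.

Definition is_e_star (m N K e : nat) : Prop :=
  (exists a : 'I_m.+1 -> nat, feasible N K a /\ erased_bits a = e) /\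
  (forall a : 'I_m.+1 -> nat, feasible N K a -> e <= erased_bits a)%N.

(* Main.v *)
Require Import Defs.
From mathcomp Require Import all_boot all_order all_algebra.
From mathcomp Require Import ring lra zify.
Import Order.TTheory GRing.Theory Num.Theory.
Local Open Scope ring_scope.

Lemma lowb (m N : nat) (c d : rat) (a : 'I_m.+1 -> nat) :
  (forall i : nat, c <= i%:R + d / (2%:R ^+ i)) ->
  num_symbols a = N ->
  c * N%:R <= (erased_bits a)%:R + d * eta a.
Proof.
move=> H <-; rewrite /num_symbols /erased_bits /eta.
rewrite !natr_sum mulr_sumr mulr_sumr -big_split /=.
apply: ler_sum => i _.
have E : d * ((a i)%:R / 2 ^+ i) = (a i)%:R * (d / 2 ^+ i) by ring.
rewrite E natrM.
have := H i; have : 0 <= (a i)%:R :> rat by [].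
move: (d / 2 ^+ i) (a i)%:R (nat_of_ord i)%:R => t A I h1 h2; nra.
Qed.


Lemma sumF (m : nat) (G : nat -> nat) :
  \sum_(i < m.+1) G i = \sum_(0 <= i < m.+1) G i.
Proof. by rewrite big_mkord. Qed.

Lemma pos2 (d : rat) i : 0 <= d -> 0 <= d / 2 ^+ i.
Proof. move=> h; apply: divr_ge0 => //; exact: exprn_ge0. Qed.

Lemma c2 (i : nat) : (2 : rat) <= i%:R + 2 / 2 ^+ i.
Proof.
case: i => [|[|i]]; first by rewrite expr0 divr1 add0r.
  by rewrite expr1 divff.
have h1 := @pos2 2 i.+2 isT.
have h2 : (2 : rat) <= i.+2%:R by rewrite ler_nat.
lra.
Qed.

Lemma c3 (i : nat) : (3 : rat) <= i%:R + 4 / 2 ^+ i.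
Proof.
case: i => [|[|[|i]]]; first by rewrite expr0 divr1 add0r.
- have -> : (4 : rat) = 2 * 2 by [].
  by rewrite expr1 mulfK.
- have -> : (4 : rat) = 2 ^+ 2 by [].
  by rewrite divff.
have h1 := @pos2 4 i.+3 isT.
have h2 : (3 : rat) <= i.+3%:R by rewrite ler_nat.
lra.
Qed.

Lemma wit1 (m' N x : nat) : (x <= N)%N ->
  let a := fun i : 'I_m'.+2 => nth 0%N [:: N - x; x]%N i in
  [/\ num_symbols a = N, erased_bits a = x &
      eta a = (N - x)%:R + x%:R / 2].
Proof.
move=> hx a.
have z : forall i : 'I_m', a (lift ord0 (lift ord0 i)) = 0%N.
  by move=> i; rewrite /a nth_default.
rewrite /num_symbols /erased_bits /eta !big_ord_recl !big1 => [|i _|i _|i _];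
  rewrite ?z ?muln0 ?mul0r //=.
split.
- rewrite /a /bump /=. lia.
- rewrite /a /bump /=. lia.
- rewrite /a /bump /= expr0 divr1 expr1 addr0. done.
Qed.

Lemma wit2 (m' N y : nat) : (y <= N)%N ->
  let a := fun i : 'I_m'.+3 => nth 0%N [:: 0; N - y; y]%N i in
  [/\ num_symbols a = N, erased_bits a = (N + y)%N &
      eta a = (N - y)%:R / 2 + y%:R / 4].
Proof.
move=> hx a.
have z : forall i : 'I_m', a (lift ord0 (lift ord0 (lift ord0 i))) = 0%N.
  by move=> i; rewrite /a nth_default.
rewrite /num_symbols /erased_bits /eta !big_ord_recl !big1 => [|i _|i _|i _];
  rewrite ?z ?muln0 ?mul0r //=.
split.
- rewrite /a /bump /=. lia.
- rewrite /a /bump /=. lia.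
- rewrite /a /bump /= add0r addr0; congr (_ / _ + _ / _); by [].
Qed.

Theorem theorem1 (m N K : nat) :
  (1 <= m)%N -> (1 <= K)%N -> (K <= N)%N -> (N <= 2 ^ m - 1)%N ->
  ((N + 2 <= 2 * K)%N -> is_e_star m N K (2 * (N - K + 1))) /\
  ((N + 4 <= 4 * K)%N -> (2 * K <= N + 2)%N ->
     is_e_star m N K (3 * N - 4 * (K - 1))).
Proof.
move=> hm hK hKN hN; split.
- move=> h; split.
  + case: m hm hN => [//|m'] _ hN.
    have hx : (2 * (N - K + 1) <= N)%N by lia.
    have [e1 e2 e3] := @wit1 m' _ _ hx.
    eexists; split; last exact: e2.
    split => //; rewrite e3 natrB // natrM natrD natrB //.
    have hK' : (1 <= K%:R :> rat) by rewrite ler1n.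
    lra.
  + move=> a [ha he].
    have := @lowb _ _ _ _ a c2 ha.
    rewrite -(ler_nat rat) natrM natrD natrB //.
    lra.
- move=> h1 h2; split.
  + case: m hm hN => [//|[|m'']] _ hN.
      have : (N <= 1)%N by rewrite expn1 in hN.
      lia.
    have hy : (2 * N - 4 * (K - 1) <= N)%N by lia.
    have [e1 e2 e3] := @wit2 m'' _ _ hy.
    exists (fun i : 'I_m''.+3 => nth 0%N [:: 0; N - (2 * N - 4 * (K - 1)); 2 * N - 4 * (K - 1)]%N i).
    split; last by rewrite e2; lia.
    split => //; rewrite e3 natrB // natrB; last by lia.
    rewrite !natrM natrB //.
    lra.
  + move=> a [ha he].
    have := @lowb _ _ _ _ a c3 ha.
    rewrite -(ler_nat rat) natrB; last by lia.
    rewrite !natrM natrB //.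
    lra.
Qed.
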